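(* Let $m,n\ge1$, $a\in(0,\infty)^m$, $b\in(0,\infty)^n$, and let $\Omega$ be a real $m\times n$ matrix. Then the function $F$ attains its maximum over $\mathcal A$ on the subset $\tilde{\mathcal A}$. Moreover, $\tilde{\mathcal A}$ is a convex, compact subset of a finite-dimensional Euclidean space, and $F$ is concave when restricted to $\tilde{\mathcal A}$.
   Context: $\mathcal A$ is the set of pairs $(A,B)$ of $(m+1)\times(n+1)$ real matrices (indices $i=0,\dots,m$, $j=0,\dots,n$) with: $A_{ij},B_{ij}\ge0$; $a_i=\sum_{j=0}^nA_{ij}$ for $i=1,\dots,m$; $A_{0j}=0$ for all $j$; $b_j=\sum_{i=0}^mB_{ij}$ for $j=1,\dots,n$; $B_{i0}=0$ for all $i$. $F:\mathcal A\to\mathbb{R}$, $F(A,B)=\sum_{i=1}^m\sum_{j=1}^n\sqrt{A_{ij}B_{ij}}\,\Omega_{ij}$. $\tilde{\mathcal A}\subset\mathcal A$ consists of those $(A,B)$ with: (1) $A_{ij}=B_{ij}=0$ whenever $i,j\ge1$ and $\Omega_{ij}\le0$; (2) for $j\ge1$, $B_{0j}=0$ if there is $i\ge1$ with $\Omega_{ij}>0$; (3) for $i\ge1$, $A_{i0}=0$ if there is $j\ge1$ with $\Omega_{ij}>0$. *)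

(* Defs.v *)
From HB Require Import structures.
From mathcomp Require Import all_boot all_order all_algebra.
From mathcomp Require Import all_classical all_reals all_analysis.
Set Implicit Arguments. Unset Strict Implicit. Unset Printing Implicit Defensive.
Import Order.TTheory GRing.Theory Num.Theory.
Import numFieldNormedType.Exports.
Local Open Scope ring_scope.
Local Open Scope classical_set_scope.

(* Matrices are (m+1) x (n+1), indices 0..m and 0..n; index i >= 1 of the
   paper corresponds to [lift ord0 i] with i : 'I_m (paper index i+1). *)
Notation MM R m n := ('M[R]_(m.+1, n.+1) * 'M[R]_(m.+1, n.+1))%type.

Section Defs.
Context {R : realType} {m n : nat}.

Definition up (i : 'I_m) : 'I_m.+1 := lift ord0 i.
Definition upn (j : 'I_n) : 'I_n.+1 := lift ord0 j.

Definition Aset (a : 'I_m -> R) (b : 'I_n -> R) : set (MM R m n) :=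
  [set p : MM R m n | let A := p.1 in let B := p.2 in
    [/\ (forall i j, 0 <= A i j) /\ (forall i j, 0 <= B i j),
        (forall i : 'I_m, a i = \sum_(j < n.+1) A (up i) j),
        (forall j, A ord0 j = 0),
        (forall j : 'I_n, b j = \sum_(i < m.+1) B i (upn j)) &
        (forall i, B i ord0 = 0)]].

Definition Atilde (Omega : 'M[R]_(m, n)) (a : 'I_m -> R) (b : 'I_n -> R)
  : set (MM R m n) :=
  [set p : MM R m n | Aset a b p /\
    [/\ (forall i j, Omega i j <= 0 ->
           p.1 (up i) (upn j) = 0 /\ p.2 (up i) (upn j) = 0),
        (forall j, (exists i, 0 < Omega i j) -> p.2 ord0 (upn j) = 0) &
        (forall i, (exists j, 0 < Omega i j) -> p.1 (up i) ord0 = 0)]].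

Definition Ffun (Omega : 'M[R]_(m, n)) (p : MM R m n) : R :=
  \sum_(i < m) \sum_(j < n)
     Num.sqrt (p.1 (up i) (upn j) * p.2 (up i) (upn j)) * Omega i j.

Definition cvx (t : R) (p q : MM R m n) : MM R m n :=
  (t *: p.1 + (1 - t) *: q.1, t *: p.2 + (1 - t) *: q.2).

End Defs.

(* Main.v *)
Require Import Defs.
From HB Require Import structures.
From mathcomp Require Import all_boot all_order all_algebra.
From mathcomp Require Import all_classical all_reals all_analysis.
From mathcomp Require Import ring.
Import Order.TTheory GRing.Theory Num.Theory.
Import numFieldNormedType.Exports.
Local Open Scope ring_scope.
Local Open Scope classical_set_scope.
Module M1.
Set Implicit Arguments. Unset Strict Implicit.

Section Red.
Variables (R : realType) (m n : nat) (Om : 'M[R]_(m, n)) (a : 'I_m -> R)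
  (A : 'M[R]_(m.+1, n.+1)).
Hypotheses (A0 : forall i j, 0 <= A i j)
  (Arow : forall i, a i = \sum_(j < n.+1) A (lift ord0 i) j)
  (Atop : forall j, A ord0 j = 0).

Definition pk (i : 'I_m) : option 'I_n := [pick j | 0 < Om i j].
Definition rr (i : 'I_m) : R := A (lift ord0 i) ord0 +
  \sum_(j < n) (if 0 < Om i j then 0 else A (lift ord0 i) (lift ord0 j)).

Definition red : 'M[R]_(m.+1, n.+1) := \matrix_(k, l)
  match unlift ord0 k with
  | None => 0
  | Some i => match unlift ord0 l with
     | None => if pk i is None then rr i else 0
     | Some j => (if 0 < Om i j then A k l else 0) +
                 (match pk i with Some j0 => if j0 == j then rr i else 0 | None => 0 end)
     end
  end.

Lemma rr_ge0 i : 0 <= rr i.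
Proof.
rewrite /rr addr_ge0 // sumr_ge0 // => j _; case: ifP => //.
Qed.

Lemma red_top l : red ord0 l = 0.
Proof. by rewrite mxE unlift_none. Qed.

Lemma red_ii i j : red (lift ord0 i) (lift ord0 j) =
  (if 0 < Om i j then A (lift ord0 i) (lift ord0 j) else 0) +
  (match pk i with Some j0 => if j0 == j then rr i else 0 | None => 0 end).
Proof. by rewrite mxE !liftK. Qed.

Lemma red_i0 i : red (lift ord0 i) ord0 = if pk i is None then rr i else 0.
Proof. by rewrite mxE liftK unlift_none. Qed.

Lemma red_ge0 k l : 0 <= red k l.
Proof.
case: (unliftP ord0 k) => [i ->|->]; last by rewrite red_top.
case: (unliftP ord0 l) => [j ->|->].
  rewrite red_ii addr_ge0 //; first by case: ifP.
  by case: (pk i) => // j0; case: ifP => // _; exact: rr_ge0.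
by rewrite red_i0; case: (pk i) => //; exact: rr_ge0.
Qed.

Lemma red_row i : a i = \sum_(l < n.+1) red (lift ord0 i) l.
Proof.
rewrite big_ord_recl red_i0.
under eq_bigr do rewrite red_ii.
rewrite big_split /=.
have -> : \sum_(j < n) (match pk i with Some j0 => if j0 == j then rr i else 0 | None => 0 end)
   = if pk i is None then 0 else rr i.
  case: (pk i) => [j0|]; last by rewrite big1.
  rewrite (bigD1 j0) //= eqxx big1 ?addr0 // => j /negbTE.
  by rewrite eq_sym => ->.
rewrite Arow big_ord_recl.
have -> : \sum_(j < n) A (lift ord0 i) (lift ord0 j) =
   \sum_(j < n) (if 0 < Om i j then 0 else A (lift ord0 i) (lift ord0 j)) +
   \sum_(j < n) (if 0 < Om i j then A (lift ord0 i) (lift ord0 j) else 0).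
  rewrite -big_split; apply: eq_bigr => j _ /=; case: ifP => _.
    by rewrite add0r.
  by rewrite addr0.
rewrite /rr; case: (pk i) => [j0|]; rewrite ?add0r ?addr0.
  by rewrite addrA addrC.
by rewrite addrA.
Qed.

Lemma red_neg i j : Om i j <= 0 -> red (lift ord0 i) (lift ord0 j) = 0.
Proof.
move=> Hle; rewrite red_ii ltNge Hle /= add0r /pk.
case: pickP => [j0 Hj0|//]; case: eqP => // Hj; subst j0.
by move: Hj0; rewrite ltNge Hle.
Qed.

Lemma red_pos i : (exists j, 0 < Om i j) -> red (lift ord0 i) ord0 = 0.
Proof.
move=> [j Hj]; rewrite red_i0 /pk; case: pickP => // /(_ j).
by rewrite Hj.
Qed.

Lemma red_mono i j : 0 < Om i j ->
  A (lift ord0 i) (lift ord0 j) <= red (lift ord0 i) (lift ord0 j).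
Proof.
move=> H; rewrite red_ii H lerDl.
by case: (pk i) => // j0; case: ifP => // _; exact: rr_ge0.
Qed.

End Red.

End M1.
Import M1.
Module M2.

Section Redp.
Variables (R : realType) (m n : nat) (Om : 'M[R]_(m, n)) (a : 'I_m -> R)
  (b : 'I_n -> R).

Definition redp (p : MM R m n) : MM R m n :=
  (red Om p.1, (red Om^T p.2^T)^T).

Lemma redp_Atilde p : Aset a b p -> Atilde Om a b (redp p).
Proof.
case: p => A B [[HA0 HB0] Ha Htop Hb Hleft] /=.
have HBT0 : forall i j, 0 <= B^T i j by move=> i j; rewrite mxE.
have HBTrow : forall j, b j = \sum_(i < m.+1) B^T (lift ord0 j) i.
  by move=> j; rewrite Hb; apply: eq_bigr => i _; rewrite mxE.
have HBTtop : forall i, B^T ord0 i = 0 by move=> i; rewrite mxE.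
split; [split; [split|..]|split] => /=.
- by move=> i j; apply: red_ge0.
- by move=> i j; rewrite mxE; apply: red_ge0.
- by move=> i; rewrite /up; apply: (red_row Om Ha).
- by move=> j; apply: red_top.
- move=> j; rewrite (red_row Om^T HBTrow j). apply: eq_bigr => i _.
  by rewrite [RHS]mxE.
- by move=> i; rewrite mxE red_top.
- move=> i j H; split; first exact: red_neg.
  by rewrite mxE; apply: red_neg; rewrite mxE.
- move=> j [i Hi]; rewrite mxE; apply: red_pos.
  by exists i; rewrite mxE.
- by move=> i Hi; apply: red_pos.
Qed.

Lemma redp_F p : Aset a b p -> Ffun Om p <= Ffun Om (redp p).
Proof.
case: p => A B [[HA0 HB0] Ha Htop Hb Hleft] /=.
have HBT0 : forall i j, 0 <= B^T i j by move=> i j; rewrite mxE.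
rewrite /Ffun /=; apply: ler_sum => i _; apply: ler_sum => j _.
case: (lerP (Om i j) 0) => H.
  rewrite /up /upn red_neg // mul0r sqrtr0 mul0r.
  by apply: mulr_ge0_le0 => //; exact: sqrtr_ge0.
apply: ler_wpM2r; first exact: ltW.
apply: ler_wsqrtr; apply: ler_pM => //.
  by rewrite /up /upn; apply: red_mono.
rewrite /up /upn mxE.
have := @red_mono R n m Om^T B^T HBT0 j i; rewrite [B^T _ _]mxE; apply.
by rewrite mxE.
Qed.

End Redp.

End M2.
Import M2.
Module M3.
Set Implicit Arguments. Unset Strict Implicit.

Section Conv.
Variables (R : realType) (m n : nat) (Om : 'M[R]_(m, n)) (a : 'I_m -> R)
  (b : 'I_n -> R).

Lemma cvx_Atilde p q t : Atilde Om a b p -> Atilde Om a b q ->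
  0 <= t <= 1 -> Atilde Om a b (cvx t p q).
Proof.
case: p => A1 B1; case: q => A2 B2.
move=> [[[HA1 HB1] Ha1 Ht1 Hb1 Hl1] [Z1 C1 D1]].
move=> [[[HA2 HB2] Ha2 Ht2 Hb2 Hl2] [Z2 C2 D2]] /andP[t0 t1].
have t1' : 0 <= 1 - t by rewrite subr_ge0.
have comb : forall x : R, t * x + (1 - t) * x = x.
  by move=> x; rewrite -mulrDl addrC subrK mul1r.
rewrite /cvx /=.
split; [split; [split|..]|split] => /=.
- by move=> i j; rewrite !mxE; apply: addr_ge0; apply: mulr_ge0.
- by move=> i j; rewrite !mxE; apply: addr_ge0; apply: mulr_ge0.
- move=> i; under eq_bigr do rewrite !mxE.
  by rewrite big_split /= -!mulr_sumr -Ha1 -Ha2 comb.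
- by move=> j; rewrite !mxE Ht1 Ht2 !mulr0 addr0.
- move=> j; under eq_bigr do rewrite !mxE.
  by rewrite big_split /= -!mulr_sumr -Hb1 -Hb2 comb.
- by move=> i; rewrite !mxE Hl1 Hl2 !mulr0 addr0.
- move=> i j H; have [e1 f1] := Z1 i j H; have [e2 f2] := Z2 i j H.
  by rewrite !mxE e1 f1 e2 f2 !mulr0 addr0.
- by move=> j H; rewrite !mxE (C1 j H) (C2 j H) !mulr0 addr0.
- by move=> i H; rewrite !mxE (D1 i H) (D2 i H) !mulr0 addr0.
Qed.

Lemma core_ineq (X1 Y1 X2 Y2 t : R) : 0 <= X1 -> 0 <= Y1 -> 0 <= X2 -> 0 <= Y2 ->
  0 <= t -> t <= 1 ->
  t * (X1 * Y1) + (1 - t) * (X2 * Y2) <=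
  Num.sqrt ((t * X1 ^+ 2 + (1 - t) * X2 ^+ 2) * (t * Y1 ^+ 2 + (1 - t) * Y2 ^+ 2)).
Proof.
move=> x1 y1 x2 y2 t0 t1.
have t1' : 0 <= 1 - t by rewrite subr_ge0.
set u := _ + _.
have u0 : 0 <= u by apply: addr_ge0; apply: mulr_ge0 => //; apply: mulr_ge0.
rewrite -(ger0_norm u0) -sqrtr_sqr; apply: ler_wsqrtr.
rewrite -subr_ge0.
have -> : (t * X1 ^+ 2 + (1 - t) * X2 ^+ 2) * (t * Y1 ^+ 2 + (1 - t) * Y2 ^+ 2) - u ^+ 2
  = t * (1 - t) * (X1 * Y2 - X2 * Y1) ^+ 2 by rewrite /u; ring.
by apply: mulr_ge0; [apply: mulr_ge0|apply: sqr_ge0].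
Qed.

Lemma sqrt_concave (x1 y1 x2 y2 t : R) : 0 <= x1 -> 0 <= y1 -> 0 <= x2 -> 0 <= y2 ->
  0 <= t -> t <= 1 ->
  t * Num.sqrt (x1 * y1) + (1 - t) * Num.sqrt (x2 * y2) <=
  Num.sqrt ((t * x1 + (1 - t) * x2) * (t * y1 + (1 - t) * y2)).
Proof.
move=> hx1 hy1 hx2 hy2 t0 t1.
rewrite (sqrtrM y1 hx1) (sqrtrM y2 hx2).
apply: le_trans (core_ineq _ _ _ _ t0 t1) _; try exact: sqrtr_ge0.
by rewrite !sqr_sqrtr.
Qed.

Lemma F_concave p q t : Atilde Om a b p -> Atilde Om a b q ->
  0 <= t <= 1 ->
  t * Ffun Om p + (1 - t) * Ffun Om q <= Ffun Om (cvx t p q).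
Proof.
case: p => A1 B1; case: q => A2 B2.
move=> [[[HA1 HB1] Ha1 Ht1 Hb1 Hl1] [Z1 C1 D1]].
move=> [[[HA2 HB2] Ha2 Ht2 Hb2 Hl2] [Z2 C2 D2]] /andP[t0 t1].
rewrite /Ffun /cvx /= !mulr_sumr -big_split; apply: ler_sum => i _.
rewrite !mulr_sumr -big_split; apply: ler_sum => j _ /=.
rewrite !mxE.
case: (lerP (Om i j) 0) => H.
  have [e1 f1] := Z1 i j H; have [e2 f2] := Z2 i j H.
  by rewrite e1 f1 e2 f2 !(mulr0, mul0r, addr0, sqrtr0).
rewrite !mulrA -mulrDl; apply: ler_wpM2r; first exact: ltW.
exact: sqrt_concave.
Qed.

End Conv.

End M3.
Import M3.
Module M4.
Set Implicit Arguments. Unset Strict Implicit.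

Lemma mx_cont (T U : topologicalType) m n (f : T -> 'M[U]_(m, n)) :
  (forall i j, continuous (fun x => f x i j)) -> continuous f.
Proof.
move=> fc x A [P Pn sPA].
apply: (@filterS _ _ _ [set y | forall ij : 'I_m * 'I_n, P ij.1 ij.2 (f y ij.1 ij.2)]).
  by move=> y Hy; apply: sPA => i j; exact: (Hy (i, j)).
apply: filter_forall => -[i j] /=; exact: (fc i j x _ (Pn i j)).
Qed.

Section Topo.
Variable R : realType.

Lemma vec_cont m n : continuous (@vec_mx R m n).
Proof.
apply: mx_cont => i j.
have -> : (fun v : 'rV[R]_(m * n) => vec_mx v i j) = (fun v => v ord0 (mxvec_index i j)).
  by apply: funext => v; rewrite -[v in RHS]vec_mxK mxvecE.
exact: coord_continuous.
Qed.

Lemma box_compact m n (M : R) :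
  compact [set X : 'M[R]_(m, n) | forall i j, 0 <= X i j <= M].
Proof.
have K := @rV_compact R (m * n) (fun _ => `[0, M]%classic) (fun _ => @segment_compact R 0 M).
have := continuous_compact (continuous_subspaceT (@vec_cont m n)) K.
congr compact; apply/seteqP; split.
  move=> _ [v Hv <-] i j.
  have -> : vec_mx v i j = v ord0 (mxvec_index i j).
    by rewrite -[v in RHS]vec_mxK mxvecE.
  by have := Hv (mxvec_index i j); rewrite /= in_itv.
move=> X HX; exists (mxvec X); last by rewrite mxvecK.
move=> k; case: (mxvec_indexP k) => i j /=; rewrite in_itv /= mxvecE; exact: HX.
Qed.

Lemma closedAll (T : topologicalType) (I : Type) (Q : I -> T -> Prop) :
  (forall i, closed [set x | Q i x]) -> closed [set x | forall i, Q i x].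
Proof.
move=> H; have := @closed_bigI T I setT (fun i => [set x | Q i x]) (fun i _ => H i).
congr closed; apply/seteqP; split => x /= Hx.
  by move=> i; exact: (Hx i Logic.I).
by move=> i _; exact: Hx.
Qed.

Lemma closedImp (T : topologicalType) (P : Prop) (Q : T -> Prop) :
  closed [set x | Q x] -> closed [set x | P -> Q x].
Proof.
move=> H; case: (pselect P) => HP.
  by congr closed: H; apply/seteqP; split => x /=; [move=> ? _|apply].
congr closed: (@closedT T); apply/seteqP; split => x //= _ /HP.
Qed.

Lemma closedEqf (T : topologicalType) (f g : T -> R) :
  continuous f -> continuous g -> closed [set x | f x = g x].
Proof.
move=> cf cg.
have cfg : continuous (fun x => f x - g x).
  by move=> x; apply: continuousB; [exact: cf|exact: cg].
have := (continuous_closedP _).1 cfg _ (@closed_eq R 0).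
congr closed; apply/seteqP; split => x /=.
  by move/eqP; rewrite subr_eq0 => /eqP.
by move=> ->; rewrite subrr.
Qed.

Lemma closedGe0f (T : topologicalType) (f : T -> R) :
  continuous f -> closed [set x | 0 <= f x].
Proof.
move=> cf; exact: ((continuous_closedP _).1 cf _ (@closed_ge R 0)).
Qed.

Lemma cont_sum (T : topologicalType) (I : Type) (s : seq I) (f : I -> T -> R) :
  (forall i, continuous (f i)) -> continuous (fun x => \sum_(i <- s) f i x).
Proof.
move=> fc; elim: s => [|i s IH] x.
  under eq_fun do rewrite big_nil; exact: cst_continuous.
under eq_fun do rewrite big_cons.
by apply: continuousD; [exact: fc|exact: IH].
Qed.

Lemma cont1 m n i j : continuous (fun p : MM R m n => p.1 i j).
Proof.
move=> x; apply: (@continuous_comp _ _ _ fst (fun M : 'M[R]_(m.+1, n.+1) => M i j)).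
  exact: cvg_fst.
exact: coord_continuous.
Qed.

Lemma cont2 m n i j : continuous (fun p : MM R m n => p.2 i j).
Proof.
move=> x; apply: (@continuous_comp _ _ _ snd (fun M : 'M[R]_(m.+1, n.+1) => M i j)).
  exact: cvg_snd.
exact: coord_continuous.
Qed.

Lemma Ffun_cont m n (Om : 'M[R]_(m, n)) : continuous (Ffun Om).
Proof.
rewrite /Ffun; apply: cont_sum => i; apply: cont_sum => j x.
apply: (@continuousM _ _ (fun p : MM R m n => Num.sqrt (p.1 (up i) (upn j) * p.2 (up i) (upn j))) (fun=> Om i j)); last exact: cst_continuous.
apply: (@continuous_comp _ _ _ (fun p : MM R m n => p.1 (up i) (upn j) * p.2 (up i) (upn j)) Num.sqrt).
  apply: (@continuousM _ _ (fun p : MM R m n => p.1 (up i) (upn j)) (fun p : MM R m n => p.2 (up i) (upn j))).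
    exact: cont1.
  exact: cont2.
exact: sqrt_continuous.
Qed.
End Topo.

End M4.
Import M4.
Module M5.
Set Implicit Arguments. Unset Strict Implicit.

Section Fin.
Variable R : realType.

Lemma closedAnd (T : topologicalType) (P Q : T -> Prop) :
  closed [set x | P x] -> closed [set x | Q x] -> closed [set x | P x /\ Q x].
Proof. exact: closedI. Qed.

Lemma closed3 (T : topologicalType) (P Q S : T -> Prop) :
  closed [set x | P x] -> closed [set x | Q x] -> closed [set x | S x] ->
  closed [set x | [/\ P x, Q x & S x]].
Proof.
move=> hp hq hs; have := closedI hp (closedI hq hs); congr closed.
by apply/seteqP; split => x /=; [move=> [? [? ?]]; split|case].
Qed.

Lemma closed5 (T : topologicalType) (P Q S U V : T -> Prop) :
  closed [set x | P x] -> closed [set x | Q x] -> closed [set x | S x] ->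
  closed [set x | U x] -> closed [set x | V x] ->
  closed [set x | [/\ P x, Q x, S x, U x & V x]].
Proof.
move=> hp hq hs hu hv.
have := closedI hp (closedI hq (closedI hs (closedI hu hv))); congr closed.
by apply/seteqP; split => x /=; [move=> [? [? [? [? ?]]]]; split|case].
Qed.

Variables (m n : nat) (Om : 'M[R]_(m, n)) (a : 'I_m -> R) (b : 'I_n -> R).

Lemma Atilde_closed : closed (Atilde Om a b).
Proof.
rewrite /Atilde /Aset /=.
apply: closedAnd; [apply: closed5 | apply: closed3].
- apply: closedAnd; apply: closedAll => i; apply: closedAll => j;
    apply: closedGe0f; [exact: cont1 | exact: cont2].
- apply: closedAll => i; apply: closedEqf; first exact: cst_continuous.
  by apply: cont_sum => j; exact: cont1.
- by apply: closedAll => j; apply: closedEqf; [exact: cont1| exact: cst_continuous].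
- apply: closedAll => j; apply: closedEqf; first exact: cst_continuous.
  by apply: cont_sum => i; exact: cont2.
- by apply: closedAll => i; apply: closedEqf; [exact: cont2| exact: cst_continuous].
- apply: closedAll => i; apply: closedAll => j; apply: closedImp.
  by apply: closedAnd; apply: closedEqf;
    [exact: cont1|exact: cst_continuous|exact: cont2|exact: cst_continuous].
- apply: closedAll => j; apply: closedImp.
  by apply: closedEqf; [exact: cont2| exact: cst_continuous].
- apply: closedAll => i; apply: closedImp.
  by apply: closedEqf; [exact: cont1| exact: cst_continuous].
Qed.

Lemma le_sum1 (I : finType) (F : I -> R) i : (forall j, 0 <= F j) -> F i <= \sum_j F j.
Proof. by move=> H; rewrite (bigD1 i) //= lerDl sumr_ge0. Qed.

Hypotheses (ha : forall i, 0 <= a i) (hb : forall j, 0 <= b j).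

Lemma Atilde_compact : compact (Atilde Om a b).
Proof.
set M := \sum_i a i + \sum_j b j.
have M0 : 0 <= M by apply: addr_ge0; apply: sumr_ge0.
have aM : forall i, a i <= M.
  move=> i; apply: le_trans (le_sum1 i ha) _; rewrite lerDl; exact: sumr_ge0.
have bM : forall j, b j <= M.
  move=> j; apply: le_trans (le_sum1 j hb) _; rewrite lerDr; exact: sumr_ge0.
have K := compact_setX (box_compact (m:=m.+1) (n:=n.+1) (M:=M)) (box_compact (m:=m.+1) (n:=n.+1) (M:=M)).
have H := subclosed_compact Atilde_closed K.
apply: H.
move=> [A B] [[[HA HB] Ha Ht Hb Hl] _]; split => /= k l; apply/andP; split => //.
  case: (unliftP ord0 k) => [i ->|->]; last by rewrite Ht.
  apply: le_trans (aM i); rewrite (Ha i); exact: (le_sum1 l (HA _)).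
case: (unliftP ord0 l) => [j ->|->]; last by rewrite Hl.
apply: le_trans (bM j); rewrite (Hb j); exact: (le_sum1 k (fun i => HB i _)).
Qed.

Definition p0 : MM R m n :=
  (\matrix_(k, l) (if unlift ord0 l is None then
       (if unlift ord0 k is Some i then a i else 0) else 0),
   \matrix_(k, l) (if unlift ord0 k is None then
       (if unlift ord0 l is Some j then b j else 0) else 0)).

Lemma p0_Aset : Aset a b p0.
Proof.
split; [split|..] => /=.
- move=> k l; rewrite mxE; case: (unlift ord0 l) => // ; case: (unlift ord0 k) => //.
- move=> k l; rewrite mxE; case: (unlift ord0 k) => // ; case: (unlift ord0 l) => //.
- move=> i; rewrite big_ord_recl big1 ?addr0; first by rewrite mxE unlift_none /up liftK.
  by move=> j _; rewrite mxE liftK.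
- by move=> j; rewrite mxE unlift_none; case: (unlift ord0 j).
- move=> j; rewrite big_ord_recl big1 ?addr0; first by rewrite mxE unlift_none /upn liftK.
  by move=> i _; rewrite mxE liftK.
- by move=> i; rewrite mxE unlift_none; case: (unlift ord0 i).
Qed.

End Fin.

End M5.
Import M5.

Theorem lemma2p14 (R : realType) (m n : nat) (hm : (0 < m)%N) (hn : (0 < n)%N)
  (a : 'I_m -> R) (b : 'I_n -> R)
  (ha : forall i, 0 < a i) (hb : forall j, 0 < b j)
  (Omega : 'M[R]_(m, n)) :
  (exists2 p, Atilde Omega a b p &
     forall q, Aset a b q -> Ffun Omega q <= Ffun Omega p)
  /\ (forall p q t, Atilde Omega a b p -> Atilde Omega a b q ->
        0 <= t <= 1 -> Atilde Omega a b (cvx t p q))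
  /\ compact (Atilde Omega a b)
  /\ (forall p q t, Atilde Omega a b p -> Atilde Omega a b q ->
        0 <= t <= 1 ->
        t * Ffun Omega p + (1 - t) * Ffun Omega q <= Ffun Omega (cvx t p q)).
Proof.
have ha' : forall i, 0 <= a i by move=> i; exact: ltW.
have hb' : forall j, 0 <= b j by move=> j; exact: ltW.
have cpt := Atilde_compact (Om := Omega) ha' hb'.
split; [ | split; [ | split]].
- have ne : Atilde Omega a b !=set0.
    exists (@redp R m n Omega (p0 a b)); apply: redp_Atilde; exact: p0_Aset.
  have [p pA pmax] := compact_EVT_max ne cpt (continuous_subspaceT (Ffun_cont (Om := Omega))).
  exists p; first by rewrite in_setE in pA.
  move=> q qA; apply: le_trans (@redp_F R m n Omega a b q qA) _; apply: pmax; rewrite in_setE.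
  exact: redp_Atilde.
- move=> p q t; exact: cvx_Atilde.
- exact: cpt.
- move=> p q t; exact: F_concave.
Qed.
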